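(* Let $G$ be a graph with no induced $P_7$, $C_4$, $C_6$ or $C_7$, let $H=(B_1,\dots,B_5)$ be a nice blowup of $C_5$ in $G$, let $i\in\{1,\dots,5\}$, and let $K$ be a connected subgraph of $G[A_2(i)]$. If two vertices $u,v\in N(K)\cap A'_3(i+1)$ are non-adjacent, then $u$ and $v$ have a common neighbor in $K$.
   Context: Indices modulo $5$. A nice blowup of $C_5$ is a tuple $(B_1,\dots,B_5)$ of pairwise disjoint cliques such that every vertex of $B_j$ has a neighbor in $B_{j-1}$ and in $B_{j+1}$, $B_j$ is anticomplete to $B_{j+2}$, and there are no $a\in B_j$, distinct $b,c\in B_{j+1}$, $d\in B_{j+2}$ with $G[\{a,b,c,d\}]\cong P_4$; $V(H)=\bigcup B_j$. For $v\notin V(H)$, $\operatorname{supp}(v)$ is the set of $j$ such that $v$ has a neighbor in $B_j$. $A_2(i)=\{v\notin V(H):\operatorname{supp}(v)=\{i,i+1\}\}$, $A_3(j)=\{v\notin V(H):\operatorname{supp}(v)=\{j-1,j,j+1\}\}$, and $A'_3(j)=A_3(j)\cup B_j$. $N(K)$ is the set of vertices outside $K$ with a neighbor in $K$. *)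

(* Defs.v *)
From mathcomp Require Import all_boot.
Set Implicit Arguments. Unset Strict Implicit. Unset Printing Implicit Defensive.

(* A finite simple graph: vertex type T : finType with a symmetric irreflexive
   adjacency relation adj. Indices of C_5 are 'I_5, with ordS/ord_pred the
   cyclic successor/predecessor (i.e. indices modulo 5). *)

Section Graphs.
Variables (T : finType) (adj : rel T).

Definition induced_path (k : nat) (f : 'I_k -> T) : Prop :=
  injective f /\ forall i j : 'I_k, adj (f i) (f j) = ((i.+1 == j) || (j.+1 == i)).

Definition induced_cycle (k : nat) (f : 'I_k -> T) : Prop :=
  injective f /\ forall i j : 'I_k,
    adj (f i) (f j) = ((i.+1 %% k == j) || (j.+1 %% k == i)).

Definition has_induced_P (k : nat) : Prop := exists f : 'I_k -> T, induced_path f.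
Definition has_induced_C (k : nat) : Prop := exists f : 'I_k -> T, induced_cycle f.

Definition induces_P4 (a b c d : T) : Prop :=
  exists f : 'I_4 -> T, induced_path f /\ [set f x | x in 'I_4] = [set a; b; c; d].

Definition clique (B : {set T}) : Prop :=
  forall x y, x \in B -> y \in B -> x != y -> adj x y.

Definition has_nbr_in (v : T) (B : {set T}) : bool := [exists u in B, adj v u].

Definition anticomplete (A B : {set T}) : Prop :=
  forall x y, x \in A -> y \in B -> ~~ adj x y.

Definition nice_blowup_C5 (B : 'I_5 -> {set T}) : Prop :=
  [/\ (forall j, clique (B j)),
      (forall j k, j != k -> [disjoint B j & B k]),
      (forall j v, v \in B j -> has_nbr_in v (B (ord_pred j)) /\ has_nbr_in v (B (ordS j))),
      (forall j, anticomplete (B j) (B (ordS (ordS j))))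
    & (forall j a b c d, a \in B j -> b \in B (ordS j) -> c \in B (ordS j) ->
         b != c -> d \in B (ordS (ordS j)) -> ~ induces_P4 a b c d)].

Definition VH (B : 'I_5 -> {set T}) : {set T} := \bigcup_(j < 5) B j.

Definition supp (B : 'I_5 -> {set T}) (v : T) : {set 'I_5} :=
  [set j | has_nbr_in v (B j)].

Definition A2 (B : 'I_5 -> {set T}) (i : 'I_5) : {set T} :=
  [set v | (v \notin VH B) && (supp B v == [set i; ordS i])].

Definition A3 (B : 'I_5 -> {set T}) (j : 'I_5) : {set T} :=
  [set v | (v \notin VH B) && (supp B v == [set ord_pred j; j; ordS j])].

Definition A3' (B : 'I_5 -> {set T}) (j : 'I_5) : {set T} := A3 B j :|: B j.

Definition nbhd (K : {set T}) : {set T} :=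
  [set v | (v \notin K) && has_nbr_in v K].

Definition connected_in (K : {set T}) : Prop :=
  K != set0 /\ forall x y, x \in K -> y \in K ->
    connect [rel a b | [&& adj a b, a \in K & b \in K]] x y.

End Graphs.

(* Main.v *)
Require Import Defs.
From mathcomp Require Import all_boot.
Set Implicit Arguments. Unset Strict Implicit.
Ltac solve_adj S I := solve [ by rewrite I | by [] | by rewrite S | by apply/negbTE | by rewrite S; apply/negbTE ].

Section S.
Variables (T : finType) (adj : rel T) (adj_sym : symmetric adj) (adj_irr : irreflexive adj).


Lemma inj_pat k (f : 'I_k -> T) (P : nat -> nat -> bool)
  (HP : forall i j : 'I_k, adj (f i) (f j) = P i j)
  (Hd : all (fun i => all (fun j => (i == j) || has (fun l => P i l != P j l) (iota 0 k)) (iota 0 k)) (iota 0 k)) :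
  injective f.
Proof.
move=> i j E; apply/val_inj/eqP; move/allP: Hd => /(_ i); rewrite mem_iota ltn_ord => /(_ isT).
move/allP => /(_ j); rewrite mem_iota ltn_ord => /(_ isT) /orP [//|/hasP [l]].
rewrite mem_iota add0n => Hl; have := HP i (Ordinal Hl); have := HP j (Ordinal Hl).
by rewrite E /= => -> ->; rewrite eqxx.
Qed.

Lemma mkP7 (a0 a1 a2 a3 a4 a5 a6 : T) :
  adj a0 a1 -> adj a1 a2 -> adj a2 a3 -> adj a3 a4 -> adj a4 a5 -> adj a5 a6 ->
  ~~ adj a0 a2 -> ~~ adj a0 a3 -> ~~ adj a0 a4 -> ~~ adj a0 a5 -> ~~ adj a0 a6 ->
  ~~ adj a1 a3 -> ~~ adj a1 a4 -> ~~ adj a1 a5 -> ~~ adj a1 a6 ->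
  ~~ adj a2 a4 -> ~~ adj a2 a5 -> ~~ adj a2 a6 ->
  ~~ adj a3 a5 -> ~~ adj a3 a6 -> ~~ adj a4 a6 -> has_induced_P adj 7.
Proof.
move=> *; pose f := fun i : 'I_7 => nth a0 [:: a0;a1;a2;a3;a4;a5;a6] i.
have HP : forall i j : 'I_7, adj (f i) (f j) = (i.+1 == j) || (j.+1 == i).
  by move=> [[|[|[|[|[|[|[|n]]]]]]] Hi] [[|[|[|[|[|[|[|m]]]]]]] Hj] //; rewrite /f /=; solve_adj adj_sym adj_irr.
exists f; split => //; apply: (@inj_pat _ f (fun i j : nat => (i.+1 == j) || (j.+1 == i)) HP); vm_compute; reflexivity.
Qed.

Lemma mkC6 (a0 a1 a2 a3 a4 a5 : T) :
  adj a0 a1 -> adj a1 a2 -> adj a2 a3 -> adj a3 a4 -> adj a4 a5 -> adj a5 a0 ->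
  ~~ adj a0 a2 -> ~~ adj a0 a3 -> ~~ adj a0 a4 ->
  ~~ adj a1 a3 -> ~~ adj a1 a4 -> ~~ adj a1 a5 ->
  ~~ adj a2 a4 -> ~~ adj a2 a5 ->
  ~~ adj a3 a5 -> has_induced_C adj 6.
Proof.
move=> *; pose f := fun i : 'I_6 => nth a0 [:: a0;a1;a2;a3;a4;a5] i.
have HP : forall i j : 'I_6, adj (f i) (f j) = (i.+1 %% 6 == j) || (j.+1 %% 6 == i).
  by move=> [[|[|[|[|[|[|n]]]]]] Hi] [[|[|[|[|[|[|m]]]]]] Hj] //; rewrite /f /=; solve_adj adj_sym adj_irr.
exists f; split => //; apply: (@inj_pat _ f (fun i j : nat => (i.+1 %% 6 == j) || (j.+1 %% 6 == i)) HP); vm_compute; reflexivity.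
Qed.

Lemma mkC7 (a0 a1 a2 a3 a4 a5 a6 : T) :
  adj a0 a1 -> adj a1 a2 -> adj a2 a3 -> adj a3 a4 -> adj a4 a5 -> adj a5 a6 -> adj a6 a0 ->
  ~~ adj a0 a2 -> ~~ adj a0 a3 -> ~~ adj a0 a4 -> ~~ adj a0 a5 ->
  ~~ adj a1 a3 -> ~~ adj a1 a4 -> ~~ adj a1 a5 -> ~~ adj a1 a6 ->
  ~~ adj a2 a4 -> ~~ adj a2 a5 -> ~~ adj a2 a6 ->
  ~~ adj a3 a5 -> ~~ adj a3 a6 -> ~~ adj a4 a6 -> has_induced_C adj 7.
Proof.
move=> *; pose f := fun i : 'I_7 => nth a0 [:: a0;a1;a2;a3;a4;a5;a6] i.
have HP : forall i j : 'I_7, adj (f i) (f j) = (i.+1 %% 7 == j) || (j.+1 %% 7 == i).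
  by move=> [[|[|[|[|[|[|[|n]]]]]]] Hi] [[|[|[|[|[|[|[|m]]]]]]] Hj] //; rewrite /f /=; solve_adj adj_sym adj_irr.
exists f; split => //; apply: (@inj_pat _ f (fun i j : nat => (i.+1 %% 7 == j) || (j.+1 %% 7 == i)) HP); vm_compute; reflexivity.
Qed.

Lemma mkC4 (a0 a1 a2 a3 : T) :
  adj a0 a1 -> adj a1 a2 -> adj a2 a3 -> adj a3 a0 ->
  ~~ adj a0 a2 -> ~~ adj a1 a3 -> a0 != a2 -> a1 != a3 -> has_induced_C adj 4.
Proof.
move=> H01 H12 H23 H30 N02 N13 D02 D13; pose f := fun i : 'I_4 => nth a0 [:: a0;a1;a2;a3] i.
have HP : forall i j : 'I_4, adj (f i) (f j) = (i.+1 %% 4 == j) || (j.+1 %% 4 == i).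
  by move=> [[|[|[|[|n]]]] Hi] [[|[|[|[|m]]]] Hj] //; rewrite /f /=; solve_adj adj_sym adj_irr.
exists f; split => //.
move=> [[|[|[|[|n]]]] Hi] [[|[|[|[|m]]]] Hj] //; rewrite /f /= => E; try by apply/val_inj.
all: subst; rewrite ?adj_irr ?eqxx in H01 H12 H23 H30 D02 D13; done.
Qed.

Lemma exit_edge (e : rel T) (X : {set T}) x y : connect e x y -> x \in X -> y \notin X ->
  exists a b, [/\ a \in X, b \notin X & e a b].
Proof.
move/connectP => [p Hp ->{y}]; elim: p x Hp => [|c p IH] x /= Hp Hx Hy.
  by rewrite Hx in Hy.
case/andP: Hp => Hxc Hp; case: (boolP (c \in X)) => Hc.
  exact: IH Hp Hc Hy.
by exists x, c.
Qed.

Lemma nonbr (S : {set T}) v y : ~~ has_nbr_in adj v S -> y \in S -> ~~ adj v y.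
Proof. move=> H Hy; apply/negP => Hvy; move/negP: H; apply; apply/existsP; exists y; by rewrite Hy Hvy. Qed.

Lemma nbrP v (S : {set T}) : has_nbr_in adj v S -> exists2 y, y \in S & adj v y.
Proof. by move/existsP => [y /andP [Hy Hvy]]; exists y. Qed.
End S.

Lemma idx (i : 'I_5) :
  (ordS (ordS (ordS (ordS (ordS i)))) = i) /\ (ord_pred (ordS i) = i) /\ (ordS (ordS (ordS i)) \notin [set ord_pred (ordS i); ordS i; ordS (ordS i)]) /\ (ordS (ordS (ordS (ordS i))) \notin [set ord_pred (ordS i); ordS i; ordS (ordS i)]) /\ (ordS (ordS i) \notin [set i; ordS i]) /\ (ordS (ordS (ordS i))  \notin [set i; ordS i]) /\ (ordS (ordS (ordS (ordS i))) \notin [set i; ordS i]).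
Proof.
case: i => [[|[|[|[|[|//]]]]] Hi]; (do ! split); try apply/val_inj => //; try by rewrite !inE.
Qed.


Theorem lemma7p2 (T : finType) (adj : rel T)
  (adj_sym : symmetric adj) (adj_irr : irreflexive adj)
  (noP7 : ~ has_induced_P adj 7) (noC4 : ~ has_induced_C adj 4)
  (noC6 : ~ has_induced_C adj 6) (noC7 : ~ has_induced_C adj 7)
  (B : 'I_5 -> {set T}) (HB : nice_blowup_C5 adj B)
  (i : 'I_5) (K : {set T})
  (HK : K \subset A2 adj B i) (Kconn : connected_in adj K)
  (u v : T)
  (Hu : u \in nbhd adj K :&: A3' adj B (ordS i))
  (Hv : v \in nbhd adj K :&: A3' adj B (ordS i))
  (Huv : u != v) (Hnadj : ~~ adj u v) :
  exists2 w, w \in K & adj u w && adj v w.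
Proof.
case: HB => Bcl Bdisj Bnbr Banti Bp4.
have [e5 [ep1 [n31 [n41 [n2K [n3K n4K]]]]]] := idx i.
move: HK Hu Hv e5 ep1 n31 n41 n2K n3K n4K.
move E1: (ordS i) => i1; move E2: (ordS i1) => i2; move E3: (ordS i2) => i3; move E4: (ordS i3) => i4.
move=> HK Hu Hv e5 ep1 n31 n41 n2K n3K n4K.
have noK : forall k j y, k \in K -> j \notin [set i; i1] -> y \in B j -> ~~ adj k y.
  move=> k j y Hk Hj Hy; move/subsetP: HK => /(_ k Hk); rewrite /A2 inE => /andP [_ /eqP Hs].
  apply: nonbr Hy; move: Hj; rewrite -E1 -Hs inE; done.
have Ht : forall t, t \in A3' adj B i1 -> [/\ exists2 x, x \in B i2 & adj t x,
    forall y, y \in B i3 -> ~~ adj t y & forall z, z \in B i4 -> ~~ adj t z].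
  move=> t; rewrite /A3' /A3 !inE => /orP [/andP [_ /eqP Hs] | Ht].
    rewrite E2 in Hs; split.
    - have : i2 \in supp adj B t by rewrite Hs !inE eqxx !orbT.
      by rewrite inE => /nbrP.
    - move=> y Hy; apply: nonbr Hy; have : i3 \notin supp adj B t by rewrite Hs.
      by rewrite inE.
    - move=> y Hy; apply: nonbr Hy; have : i4 \notin supp adj B t by rewrite Hs.
      by rewrite inE.
  split.
  - have [_] := Bnbr i1 t Ht; rewrite E2 => /nbrP; done.
  - move=> y Hy; have := Banti i1 t y Ht; rewrite E2 E3; exact.
  - move=> z Hz; have := Banti i4 z t Hz; rewrite e5 E1 adj_sym; exact.
have [Hun HuA] : (u \in nbhd adj K) /\ (u \in A3' adj B i1) by move: Hu; rewrite inE => /andP.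
have [Hvn HvA] : (v \in nbhd adj K) /\ (v \in A3' adj B i1) by move: Hv; rewrite inE => /andP.
have [[x Hx Hux] Nuy Nuz] := Ht u HuA.
have [_ Nvy Nvz] := Ht v HvA.
have [y Hy Hxy] : exists2 y, y \in B i3 & adj x y.
  by have [_] := Bnbr i2 x Hx; rewrite E3 => /nbrP.
have [z Hz Hyz] : exists2 z, z \in B i4 & adj y z.
  by have [_] := Bnbr i3 y Hy; rewrite E4 => /nbrP.
have [w Hw Hzw] : exists2 w, w \in B i & adj z w.
  by have [_] := Bnbr i4 z Hz; rewrite e5 => /nbrP.
have Nwx : ~~ adj w x by have := Banti i w x Hw; rewrite E1 E2; exact.
have Nyw : ~~ adj y w by have := Banti i3 y w Hy; rewrite E4 e5; exact.
have Nxz : ~~ adj x z by have := Banti i2 x z Hx; rewrite E3 E4; exact.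
have Nuy' := Nuy y Hy. have Nuz' := Nuz z Hz. have Nvy' := Nvy y Hy. have Nvz' := Nvz z Hz.
case: (boolP [exists k, [&& k \in K, adj u k & adj v k]]) => [/existsP [k /and3P [Hk H1 H2]]|Hno].
  by exists k => //; rewrite H1 H2.
have Hno' : forall k, k \in K -> adj u k -> ~~ adj v k.
  move=> k Hk H1; apply/negP => H2; move/negP: Hno; apply; apply/existsP; exists k; by rewrite Hk H1 H2.
have [k0 Hk0 Huk0] : exists2 k, k \in K & adj u k.
  by move: Hun; rewrite inE => /andP [_ /nbrP].
have [kv Hkv Hvkv] : exists2 k, k \in K & adj v k.
  by move: Hvn; rewrite inE => /andP [_ /nbrP].
case: (boolP [exists a, exists b, [&& a \in K, b \in K, adj u a, adj a b & adj v b]]) => [|HnA].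
  move/existsP => [a /existsP [b /and5P [Ha Hb Hua Hab Hvb]]].
  have Nva : ~~ adj v a by apply: Hno'.
  have Nub : ~~ adj u b by apply/negP => Hub; move: (Hno' b Hb Hub); rewrite Hvb.
  have Nax := noK a i2 x Ha n2K Hx. have Nbx := noK b i2 x Hb n2K Hx.
  have Nay := noK a i3 y Ha n3K Hy. have Nby := noK b i3 y Hb n3K Hy.
  have Naz := noK a i4 z Ha n4K Hz. have Nbz := noK b i4 z Hb n4K Hz.
  case: (boolP (adj v x)) => Hvx; last first.
    by case: noP7; apply: (@mkP7 T adj adj_sym adj_irr z y x u a b v); solve_adj adj_sym adj_irr.
  case: (boolP (adj w u)) => Hwu.
    case: (boolP (adj w v)) => Hwv.
      case: noC4; apply: (@mkC4 T adj adj_sym adj_irr w u x v); try solve_adj adj_sym adj_irr.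
      by apply/eqP => E; move: Hzw; rewrite E adj_sym; apply/negP.
    case: (boolP (adj w b)) => Hwb.
      by case: noC6; apply: (@mkC6 T adj adj_sym adj_irr w z y x v b); solve_adj adj_sym adj_irr.
    case: (boolP (adj w a)) => Hwa.
      by case: noC7; apply: (@mkC7 T adj adj_sym adj_irr w z y x v b a); solve_adj adj_sym adj_irr.
    by case: noP7; apply: (@mkP7 T adj adj_sym adj_irr w z y x v b a); solve_adj adj_sym adj_irr.
  case: (boolP (adj w a)) => Hwa.
    by case: noC6; apply: (@mkC6 T adj adj_sym adj_irr w z y x u a); solve_adj adj_sym adj_irr.
  case: (boolP (adj w b)) => Hwb.
    by case: noC7; apply: (@mkC7 T adj adj_sym adj_irr w z y x u a b); solve_adj adj_sym adj_irr.
  by case: noP7; apply: (@mkP7 T adj adj_sym adj_irr w z y x u a b); solve_adj adj_sym adj_irr.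
pose X := [set c in K | adj u c || [exists a, [&& a \in K, adj u a & adj a c]]].
have Hk0X : k0 \in X by rewrite inE Hk0 Huk0.
have HkvX : kv \notin X.
  rewrite inE Hkv /=; apply/norP; split.
    by apply/negP => H; move: (Hno' kv Hkv H); rewrite Hvkv.
  apply/negP => /existsP [a /and3P [Ha Hua Hakv]]; move/negP: HnA; apply.
  by apply/existsP; exists a; apply/existsP; exists kv; rewrite Ha Hkv Hua Hakv Hvkv.
have [b [c [HbX HcX /= /and3P [Hbc Hb Hc]]]] := exit_edge (proj2 Kconn k0 kv Hk0 Hkv) Hk0X HkvX.
have Nub : ~~ adj u b.
  apply/negP => Hub; move: HcX; rewrite inE Hc /=; apply/negP; rewrite negbK.
  by apply/orP; right; apply/existsP; exists b; rewrite Hb Hub Hbc.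
have [a Ha /andP [Hua Hab]] : exists2 a, a \in K & adj u a && adj a b.
  move: HbX; rewrite inE => /andP [_ /orP [H|/existsP [a /and3P [Ha Hua Hab]]]].
    by rewrite H in Nub.
  by exists a => //; rewrite Hua Hab.
have [Nuc Nac] : ~~ adj u c /\ ~~ adj a c.
  move: HcX; rewrite inE Hc /= negb_or => /andP [-> H]; split => //.
  apply/negP => Hac; move/negP: H; apply; apply/existsP; exists a; by rewrite Ha Hua Hac.
have Nax := noK a i2 x Ha n2K Hx. have Nbx := noK b i2 x Hb n2K Hx. have Ncx := noK c i2 x Hc n2K Hx.
have Nay := noK a i3 y Ha n3K Hy. have Nby := noK b i3 y Hb n3K Hy. have Ncy := noK c i3 y Hc n3K Hy.
have Naz := noK a i4 z Ha n4K Hz. have Nbz := noK b i4 z Hb n4K Hz. have Ncz := noK c i4 z Hc n4K Hz.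
by case: noP7; apply: (@mkP7 T adj adj_sym adj_irr z y x u a b c); solve_adj adj_sym adj_irr.
Qed.
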